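(* Let $A,B\in M_\ell(F)$ commute, let $F_A$ be an idempotent associated with $A$, and let $Q''_L=\mathrm{CSS}(A,(H_Z)_L)$ with $(H_Z)_L=(B(I-F_A))^T$. Suppose $A$ is block-diagonal, i.e., there is a partition of the index set $\{1,\dots,\ell\}$ into consecutive intervals each of size at most $m$ such that $A_{ij}=0$ whenever $i,j$ lie in different intervals. If $Q''_L$ is non-trivial (its dimension $\ell-\mathrm{rank}A-\mathrm{rank}(B(I-F_A))$ is positive), then $d_Z(Q''_L)\le m$.
   Context: $F=\mathbb F_q$ is a finite field. For $H_X,H_Z$ with $n$ columns and $H_XH_Z^T=0$, $\mathrm{CSS}(H_X,H_Z)$ has dimension $n-\mathrm{rank}H_X-\mathrm{rank}H_Z$ and $Z$-distance $d_Z=\min\{\mathrm{wgt}(c):c\in C_{H_X}^\perp\setminus C_{H_Z}\}$, with $C_H$ the row space of $H$ and $C_H^\perp$ its orthogonal complement. An idempotent associated with $A$ on the right is any $F_A$ with $F_A^2=F_A$, $\mathrm{rank}F_A=\mathrm{rank}A$, $AF_A=A$. Note $A(B(I-F_A))=B(A-AF_A)=0$, so $Q''_L$ is a stabilizer CSS code. *)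

(* Defs.v *)
From HB Require Import structures.
From mathcomp Require Import all_boot all_order all_algebra all_field.
Set Implicit Arguments. Unset Strict Implicit. Unset Printing Implicit Defensive.
Import GRing.Theory.
Local Open Scope ring_scope.

Definition wgt (F : fieldType) (n : nat) (c : 'rV[F]_n) : nat :=
  #|[set j : 'I_n | c 0 j != 0]|.

Definition in_dual (F : fieldType) (r n : nat) (H : 'M[F]_(r, n)) (c : 'rV[F]_n) : bool :=
  H *m c^T == 0.
Definition in_rowspace (F : fieldType) (r n : nat) (H : 'M[F]_(r, n)) (c : 'rV[F]_n) : bool :=
  (c <= H)%MS.

Definition css_dim (F : fieldType) (r1 r2 n : nat)
  (HX : 'M[F]_(r1, n)) (HZ : 'M[F]_(r2, n)) : int :=
  (n%:Z - (\rank HX)%:Z - (\rank HZ)%:Z)%R.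

(* Z-distance: min weight over C_HX^perp \ C_HZ ; n.+1 (an "infinity" exceeding
   every weight) if that set is empty. *)
Definition dZ (F : finFieldType) (r1 r2 n : nat)
  (HX : 'M[F]_(r1, n)) (HZ : 'M[F]_(r2, n)) : nat :=
  \big[minn/n.+1]_(c : 'rV[F]_n | in_dual HX c && ~~ in_rowspace HZ c) wgt c.

Definition idem_assoc (F : fieldType) (l : nat) (A FA : 'M[F]_l) : Prop :=
  [/\ FA *m FA = FA, \rank FA = \rank A & A *m FA = A].

Definition block_diag_intervals (F : fieldType) (l m : nat) (A : 'M[F]_l) : Prop :=
  exists P : {set {set 'I_l}},
    [/\ partition P [set: 'I_l],
        (forall S, S \in P -> forall i j k : 'I_l,
             i \in S -> k \in S -> (i <= j <= k)%N -> j \in S),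
        (forall S, S \in P -> (#|S| <= m)%N) &
        (forall i j : 'I_l, pblock P i != pblock P j -> A i j = 0)].

(* Main.v *)
Require Import Defs.
From HB Require Import structures.
From mathcomp Require Import all_boot all_order all_algebra all_field.
From mathcomp Require Import zify.
Import GRing.Theory.
Local Open Scope ring_scope.

Lemma minn_big_le (I : finType) (x : nat) (P : pred I) (G : I -> nat) j :
  P j -> (\big[minn/x]_(i | P i) G i <= G j)%N.
Proof.
move=> Pj; rewrite -big_filter.
have : j \in filter P (index_enum I) by rewrite mem_filter Pj mem_index_enum.
elim: (filter P _) => //= a s IH; rewrite big_cons in_cons.
case/orP => [/eqP->|/IH h]; first exact: geq_minl.
exact: leq_trans (geq_minr _ _) h.
Qed.

Section Proj.
Variables (F : fieldType) (l : nat).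
Definition Dm (S : {set 'I_l}) : 'M[F]_l := diag_mx (\row_j ((j \in S)%:R)).

Lemma Dm_sum (P : {set {set 'I_l}}) : partition P [set: 'I_l] ->
  \sum_(S in P) Dm S = 1%:M.
Proof.
move=> /and3P [/eqP cov triv _].
apply/matrixP => i k; rewrite summxE !mxE.
under eq_bigr do rewrite !mxE.
rewrite sumrMnl.
have ->: \sum_(S in P) ((i \in S)%:R : F) = 1.
  have iP : i \in cover P by rewrite cov inE.
  rewrite (bigD1 (pblock P i)) ?(pblock_mem iP) //= (mem_pblock P i) iP big1 ?addr0 //.
  move=> S /andP [SP neS]; case iS: (i \in S) => //.
  by rewrite (def_pblock triv SP iS) eqxx in neS.
by [].
Qed.
End Proj.

Theorem mainTheorem5 (F : finFieldType) (l m : nat) (A B FA : 'M[F]_l) :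
  A *m B = B *m A ->
  idem_assoc A FA ->
  block_diag_intervals m A ->
  (0 < css_dim A (B *m (1%:M - FA))^T)%R ->
  (dZ A (B *m (1%:M - FA))^T <= m)%N.
Proof.
move=> _ _ [P [partP _ szP blk]] dimpos.
set HZ := (B *m (1%:M - FA))^T.
have partP' := partP; move: partP' => /and3P [/eqP cov triv _].
rewrite leqNgt; apply/negP => hlt.
have key : forall c : 'rV[F]_l, c *m A^T = 0 -> (wgt c <= m)%N -> (c <= HZ)%MS.
  move=> c cA wc; apply/negPn/negP => nc.
  have : (dZ A HZ <= wgt c)%N.
    apply: minn_big_le; rewrite nc andbT /in_dual.
    by apply/eqP; apply: trmx_inj; rewrite trmx_mul trmxK cA trmx0.
  by move=> h; move: (leq_ltn_trans (leq_trans h wc) hlt); rewrite ltnn.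
have comm : forall S, S \in P -> Dm F l S *m A^T = A^T *m Dm F l S.
  move=> S SP; apply/matrixP => i k.
  rewrite mul_mx_diag mul_diag_mx !mxE.
  have [e|ne] := eqVneq (pblock P i) (pblock P k).
    have iP : i \in cover P by rewrite cov inE.
    have kP : k \in cover P by rewrite cov inE.
    have -> : (k \in S) = (i \in S).
      apply/idP/idP => h.
        by rewrite -(def_pblock triv SP h) -e mem_pblock.
      by rewrite -(def_pblock triv SP h) e mem_pblock.
    by rewrite mulrC.
  by rewrite blk ?mul0r ?mulr0 // eq_sym.
have sub : (kermx A^T <= HZ)%MS.
  apply/row_subP => r; set c := row r _.
  have cA : c *m A^T = 0 by apply/sub_kermxP; rewrite row_sub.
  rewrite -[c]mulmx1 -((@Dm_sum F l P partP)) mulmx_sumr; apply/summx_sub => S SP.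
  apply: key; first by rewrite -mulmxA comm // mulmxA cA mul0mx.
  apply: leq_trans (szP S SP); apply: subset_leq_card; apply/subsetP => j.
  rewrite inE mul_mx_diag !mxE; case: (j \in S) => //.
  by rewrite mulr0 eqxx.
have := mxrankS sub; rewrite mxrank_ker !mxrank_tr.
move: dimpos; rewrite /css_dim /HZ mxrank_tr.
have := rank_leq_row A.
lia.
Qed.
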